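(* Let $h>0$, $n\in\mathbb{N}$, and let $\lambda:\mathbb{T}\to\mathbb{R}$ be an $n$-cycle with values $\lambda_0,\dots,\lambda_{n-1}\in\mathbb{R}\setminus\{\pm\tfrac1h\}$, such that $0<|e_{\lambda}(nh)|\neq1$ and $0<|e_{-\lambda}(nh)|\neq1$. Define for $t\in\mathbb{T}$ $$p(t)=\lambda(t+2h),\quad q(t)=\Delta_h\lambda(t+h)-\lambda(t+h)\lambda(t+2h),$$ $$r(t)=\Delta_h^2\lambda(t)-\lambda(t)\Delta_h\lambda(t+h)-\lambda(t)\lambda(t+h)\lambda(t+2h).$$ Then the third-order equation $$\Delta_h^3y(t)+p(t)\Delta_h^2y(t)+q(t)\Delta_h y(t)+r(t)y(t)=0,\qquad t\in\mathbb{T},$$ has Hyers–Ulam stability on $\mathbb{T}$ with Hyers–Ulam stability constant $K=K_0(\lambda)\bigl(K_0(-\lambda)\bigr)^2$.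
   Context: Fix $h>0$ and let $\mathbb{T}=\{0,h,2h,3h,\dots\}$. For $x:\mathbb{T}\to\mathbb{R}$, $\Delta_h x(t)=\frac{x(t+h)-x(t)}{h}$ and $\Delta_h^2x=\Delta_h(\Delta_h x)$, $\Delta_h^3x=\Delta_h(\Delta_h^2 x)$. An $n$-cycle is a function $\mu:\mathbb{T}\to\mathbb{R}$ with $\mu(t)=\mu_k$ whenever $t/h\equiv k\pmod n$, $k\in\{0,\dots,n-1\}$, which has period $n$ and no smaller period. For such $\mu$ define the discrete exponential $e_\mu(t)=\prod_{k=0}^{t/h-1}(1+h\mu(kh))$ (empty product $=1$), so $e_\mu(nh)=\prod_{k=0}^{n-1}(1+h\mu_k)$. For $k\in\{0,\dots,n-1\}$ define $$S_k(\mu)=\sum_{j=1}^{n}\prod_{i=0}^{j-1}\frac{1}{|1+h\mu_{(k+i)\bmod n}|},$$ (e.g. $S_0(\mu)=\frac{1}{|1+h\mu_0|}+\frac{1}{|1+h\mu_0||1+h\mu_1|}+\dots+\frac{1}{|1+h\mu_0|\cdots|1+h\mu_{n-1}|}$), and, when $0<|e_\mu(nh)|\neq1$, $$K_0(\mu)=\frac{h|e_\mu(nh)|}{\bigl|1-|e_\mu(nh)|\bigr|}\max\{S_0(\mu),\dots,S_{n-1}(\mu)\}.$$ Here $-\lambda$ denotes the $n$-cycle with values $-\lambda_0,\dots,-\lambda_{n-1}$. Hyers–Ulam stability: an equation $\mathcal{L}[y](t)=f(t)$, $t\in\mathbb{T}$ (with $\mathcal{L}$ a linear difference operator) has Hyers–Ulam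 stability on $\mathbb{T}$ with Hyers–Ulam stability constant $K>0$ if for every $\varepsilon>0$ and every $\xi:\mathbb{T}\to\mathbb{R}$ with $|\mathcal{L}[\xi](t)-f(t)|\le\varepsilon$ for all $t\in\mathbb{T}$, there is a solution $y:\mathbb{T}\to\mathbb{R}$ of the equation with $|\xi(t)-y(t)|\le K\varepsilon$ for all $t\in\mathbb{T}$. The minimum Hyers–Ulam stability constant is the smallest such $K$. *)

(* Defs.v *)
(* concrete reals R. Time scale T = {0,h,2h,...} is indexed by
   k : nat, with t = k*h; a function x : T -> R is a function nat -> R. *)
From Stdlib Require Import Reals Lra List.
Open Scope R_scope.

Definition Dh (h : R) (x : nat -> R) : nat -> R :=
  fun k => (x (S k) - x k) / h.

Definition ncycle (n : nat) (mu : nat -> R) : Prop :=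
  (0 < n)%nat /\
  (forall k, mu (k + n)%nat = mu k) /\
  (forall m, (0 < m)%nat -> (m < n)%nat -> ~ (forall k, mu (k + m)%nat = mu k)).

Fixpoint dexp (h : R) (mu : nat -> R) (m : nat) : R :=
  match m with
  | O => 1
  | S m' => dexp h mu m' * (1 + h * mu m')
  end.

Fixpoint Sprod (h : R) (n : nat) (mu : nat -> R) (k j : nat) : R :=
  match j with
  | O => 1
  | S j' => Sprod h n mu k j' * / Rabs (1 + h * mu (Nat.modulo (k + j') n))
  end.

Definition Sk (h : R) (n : nat) (mu : nat -> R) (k : nat) : R :=
  fold_right Rplus 0 (map (fun j => Sprod h n mu k j) (seq 1 n)).

(* max{S_0, ..., S_{n-1}} (all S_k are positive, so starting the fold at 0
   is harmless for n >= 1) *)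
Definition Smax (h : R) (n : nat) (mu : nat -> R) : R :=
  fold_right Rmax 0 (map (fun k => Sk h n mu k) (seq 0 n)).

Definition K0 (h : R) (n : nat) (mu : nat -> R) : R :=
  h * Rabs (dexp h mu n) / Rabs (1 - Rabs (dexp h mu n)) * Smax h n mu.

Definition HUS (L : (nat -> R) -> nat -> R) (f : nat -> R) (K : R) : Prop :=
  0 < K /\
  forall eps : R, 0 < eps ->
  forall xi : nat -> R,
    (forall k, Rabs (L xi k - f k) <= eps) ->
    exists y : nat -> R,
      (forall k, L y k = f k) /\
      (forall k, Rabs (xi k - y k) <= K * eps).

(* Main.v *)
Require Import Defs.
From Stdlib Require Import Reals Lra Lia List Arith FunctionalExtensionality.
Open Scope R_scope.

Fixpoint Pr (a : nat -> R) (k m : nat) : R :=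
  match m with O => 1 | S m' => Pr a k m' * a (k + m')%nat end.
Fixpoint Y (a : nat -> R) (k m : nat) : R :=
  match m with O => 0 | S m' => Y a k m' + / Rabs (Pr a k (S m')) end.
Fixpoint W (a : nat -> R) (k m : nat) : R :=
  match m with O => 0 | S m' => Rabs (a (k + m')%nat) * W a k m' + 1 end.

Lemma Pr_add a k m1 m2 : Pr a k (m1 + m2) = Pr a k m1 * Pr a (k + m1) m2.
Proof.
  induction m2 as [|m2 IH]; simpl.
  - rewrite Nat.add_0_r; ring.
  - rewrite Nat.add_succ_r; simpl; rewrite IH.
    replace (k + (m1 + m2))%nat with (k + m1 + m2)%nat by lia; ring.
Qed.

Lemma Pr_nz a k m : (forall j, a j <> 0) -> Pr a k m <> 0.
Proof.
  intros H; induction m; simpl. lra. apply Rmult_integral_contrapositive; auto.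
Qed.

Lemma Pr_shift a s k m : Pr (fun j => a (j + s)%nat) k m = Pr a (k + s) m.
Proof.
  induction m; simpl; auto. rewrite IHm. do 2 f_equal. lia.
Qed.

Lemma Y_shift a s k m : Y (fun j => a (j + s)%nat) k m = Y a (k + s) m.
Proof.
  induction m; auto. change (Y (fun j => a (j + s)%nat) k m + / Rabs (Pr (fun j => a (j + s)%nat) k (S m)) = Y a (k+s) m + / Rabs (Pr a (k+s) (S m))).
  rewrite IHm, Pr_shift. reflexivity.
Qed.

Lemma per_mul (a : nat -> R) n : (forall k, a (k + n)%nat = a k) ->
  forall q k, a (k + q * n)%nat = a k.
Proof.
  intros H q; induction q; intros k; simpl. rewrite Nat.add_0_r; auto.
  replace (k + (n + q * n))%nat with (k + q * n + n)%nat by lia. rewrite H; auto.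
Qed.

Lemma per_mod (a : nat -> R) n : (0 < n)%nat -> (forall k, a (k + n)%nat = a k) ->
  forall x, a (x mod n) = a x.
Proof.
  intros Hn H x. rewrite (Nat.div_mod x n) at 2 by lia.
  replace (n * (x / n) + x mod n)%nat with (x mod n + (x / n) * n)%nat by lia.
  rewrite per_mul; auto.
Qed.

Lemma Pr_per a n k m : (forall k, a (k + n)%nat = a k) -> Pr a (k + n) m = Pr a k m.
Proof.
  intros H; induction m; simpl; auto. rewrite IHm.
  replace (k + n + m)%nat with (k + m + n)%nat by lia. rewrite H; auto.
Qed.

Lemma Pr_const a n k : (forall j, a j <> 0) -> (forall k, a (k + n)%nat = a k) ->
  Pr a k n = Pr a 0 n.
Proof.
  intros Hz H.
  assert (E1 := Pr_add a 0 k n). assert (E2 := Pr_add a 0 n k).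
  rewrite Nat.add_comm in E2. rewrite E1 in E2.
  assert (E3 := Pr_per a n 0 k H). simpl in E2, E3. rewrite E3 in E2.
  apply (Rmult_eq_reg_l (Pr a 0 k)). lra. apply Pr_nz; auto.
Qed.

Lemma Y_add a k m1 m2 : (forall j, a j <> 0) ->
  Y a k (m1 + m2) = Y a k m1 + / Rabs (Pr a k m1) * Y a (k + m1) m2.
Proof.
  intros Hz; induction m2 as [|m2 IH]; simpl.
  - rewrite Nat.add_0_r; ring.
  - rewrite Nat.add_succ_r; simpl; rewrite IH.
    replace (Pr a k (m1 + m2) * a (k + (m1 + m2))%nat) with (Pr a k (S (m1 + m2))) by reflexivity.
    rewrite <- Nat.add_succ_r, Pr_add, Rabs_mult, Rinv_mult. simpl. ring.
Qed.

Lemma Y_nonneg a k m : 0 <= Y a k m.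
Proof.
  induction m; simpl. lra. assert (0 <= / Rabs (Pr a k (S m))).
  { destruct (Req_dec (Rabs (Pr a k (S m))) 0) as [E|E]. rewrite E, Rinv_0; lra.
    apply Rlt_le, Rinv_0_lt_compat. assert (0 <= Rabs (Pr a k (S m))) by apply Rabs_pos. lra. }
  simpl in H. lra.
Qed.

Lemma Y_mono a k m d : Y a k m <= Y a k (m + d).
Proof.
  induction d. rewrite Nat.add_0_r; lra.
  rewrite Nat.add_succ_r. simpl.
  assert (0 <= / Rabs (Pr a k (S (m + d)))).
  { destruct (Req_dec (Rabs (Pr a k (S (m+d)))) 0) as [E|E]. rewrite E, Rinv_0; lra.
    apply Rlt_le, Rinv_0_lt_compat. assert (0 <= Rabs (Pr a k (S (m+d)))) by apply Rabs_pos. lra. }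
  simpl in H. lra.
Qed.

Lemma Y_per a n k m : (forall k, a (k + n)%nat = a k) -> Y a (k + n) m = Y a k m.
Proof.
  intros H; induction m; simpl; auto. rewrite IHm.
  replace (Pr a (k + n) m * a (k + n + m)%nat) with (Pr a (k+n) (S m)) by reflexivity.
  rewrite Pr_per; auto.
Qed.

Lemma W_add a k m1 m2 :
  W a k (m1 + m2) = Rabs (Pr a (k + m1) m2) * W a k m1 + W a (k + m1) m2.
Proof.
  induction m2 as [|m2 IH]; simpl.
  - rewrite Nat.add_0_r, Rabs_R1; ring.
  - rewrite Nat.add_succ_r; simpl; rewrite IH, Rabs_mult.
    replace (k + (m1 + m2))%nat with (k + m1 + m2)%nat by lia; ring.
Qed.

Lemma W_nonneg a k m : 0 <= W a k m.
Proof.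
  induction m; simpl. lra. assert (0 <= Rabs (a (k+m)%nat)) by apply Rabs_pos. nra.
Qed.

Lemma W_per a n k m : (forall k, a (k + n)%nat = a k) -> W a (k + n) m = W a k m.
Proof.
  intros H; induction m; simpl; auto. rewrite IHm.
  replace (k + n + m)%nat with (k + m + n)%nat by lia. rewrite H; auto.
Qed.

Lemma W_Y a k m : (forall j, a j <> 0) -> W a k m = Rabs (Pr a k m) * Y a k m.
Proof.
  intros Hz; induction m; simpl. ring. rewrite IHm.
  assert (Pr a k m <> 0) by (apply Pr_nz; auto).
  assert (a (k+m)%nat <> 0) by auto.
  rewrite Rabs_mult. field. split; apply Rabs_no_R0; auto.
Qed.

Lemma W_bound a n M : (0 < n)%nat -> (forall j, a j <> 0) ->
  (forall k, a (k + n)%nat = a k) -> Rabs (Pr a 0 n) < 1 ->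
  (forall k, Y a k n <= M) ->
  forall k, W a 0 k <= Rabs (Pr a 0 n) / (1 - Rabs (Pr a 0 n)) * M.
Proof.
  intros Hn Hz Hp Hr HM.
  set (rho := Rabs (Pr a 0 n)) in *.
  assert (Hrho0 : 0 <= rho) by apply Rabs_pos.
  assert (HM0 : 0 <= M) by (apply Rle_trans with (Y a 0 n); [apply Y_nonneg|auto]).
  assert (Hk : forall k, Rabs (Pr a k n) = rho) by (intros; unfold rho; rewrite Pr_const; auto).
  assert (HB : rho * M <= rho / (1 - rho) * M).
  { unfold Rdiv. rewrite Rmult_assoc, (Rmult_comm (/ _)), <- Rmult_assoc.
    assert (0 <= rho * M) by nra.
    assert (1 <= / (1 - rho)).
    { rewrite <- Rinv_1 at 1. apply Rinv_le_contravar; lra. }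
    nra. }
  intros k; induction k as [k IH] using (well_founded_induction lt_wf).
  destruct (Nat.lt_ge_cases k n) as [Hlt|Hge].
  - assert (E := W_per a n 0 k Hp). simpl in E. rewrite <- E.
    assert (E2 := W_add a k (n - k) k).
    replace (n - k + k)%nat with n in E2 by lia.
    replace (k + (n - k))%nat with n in E2 by lia.
    assert (0 <= Rabs (Pr a n k) * W a k (n - k)).
    { apply Rmult_le_pos; [apply Rabs_pos| apply W_nonneg]. }
    rewrite W_Y in E2 by auto. rewrite Hk in E2.
    assert (rho * Y a k n <= rho * M) by (apply Rmult_le_compat_l; auto).
    lra.
  - destruct (Nat.le_exists_sub n k Hge) as [k' [Ek _]]. subst k.
    rewrite W_add. simpl. rewrite (W_Y a k' n) by auto. rewrite !Hk.
    assert (W a 0 k' <= rho / (1 - rho) * M) by (apply IH; lia).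
    assert (rho * Y a k' n <= rho * M) by (apply Rmult_le_compat_l; auto).
    assert (rho * W a 0 k' <= rho * (rho / (1 - rho) * M)) by (apply Rmult_le_compat_l; auto).
    assert (rho * (rho / (1 - rho) * M) + rho * M = rho / (1 - rho) * M) by (field; lra).
    lra.
Qed.

Lemma Y_bound a n M : (0 < n)%nat -> (forall j, a j <> 0) ->
  (forall k, a (k + n)%nat = a k) -> 1 < Rabs (Pr a 0 n) ->
  (forall k, Y a k n <= M) ->
  forall m k, Y a k m <= Rabs (Pr a 0 n) / (Rabs (Pr a 0 n) - 1) * M.
Proof.
  intros Hn Hz Hp Hr HM.
  set (rho := Rabs (Pr a 0 n)) in *.
  assert (HM0 : 0 <= M) by (apply Rle_trans with (Y a 0 n); [apply Y_nonneg|auto]).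
  assert (Hk : forall k, Rabs (Pr a k n) = rho) by (intros; unfold rho; rewrite Pr_const; auto).
  assert (HB : M <= rho / (rho - 1) * M).
  { assert (1 <= rho / (rho - 1)).
    { apply (Rmult_le_reg_r (rho - 1)). lra. unfold Rdiv. rewrite Rmult_assoc, Rinv_l; lra. }
    nra. }
  intros m; induction m as [m IH] using (well_founded_induction lt_wf); intros k.
  destruct (Nat.lt_ge_cases m n) as [Hlt|Hge].
  - assert (Y a k m <= Y a k (m + (n - m))) by apply Y_mono.
    replace (m + (n - m))%nat with n in H by lia.
    specialize (HM k). lra.
  - destruct (Nat.le_exists_sub n m Hge) as [m' [Em _]]. subst m.
    rewrite Nat.add_comm, Y_add by auto. rewrite Hk.
    assert (Y a (k + n) m' <= rho / (rho - 1) * M) by (apply IH; lia).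
    assert (/ rho * Y a (k + n) m' <= / rho * (rho / (rho - 1) * M)).
    { apply Rmult_le_compat_l; auto. apply Rlt_le, Rinv_0_lt_compat; lra. }
    assert (M + / rho * (rho / (rho - 1) * M) = rho / (rho - 1) * M) by (field; lra).
    specialize (HM k). lra.
Qed.

Fixpoint dsol (a : nat -> R) (h : R) (e : nat -> R) (k : nat) : R :=
  match k with O => 0 | S k' => a k' * dsol a h e k' + h * e k' end.

Lemma core_lt a n M h eps e : (0 < n)%nat -> (forall j, a j <> 0) ->
  (forall k, a (k + n)%nat = a k) -> Rabs (Pr a 0 n) < 1 ->
  (forall k, Y a k n <= M) -> 0 < h -> 0 <= eps -> (forall k, Rabs (e k) <= eps) ->
  exists d, (forall k, d (S k) = a k * d k + h * e k) /\
    (forall k, Rabs (d k) <= h * Rabs (Pr a 0 n) / Rabs (1 - Rabs (Pr a 0 n)) * M * eps).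
Proof.
  intros Hn Hz Hp Hr HM Hh He Hek.
  exists (dsol a h e). split. reflexivity.
  assert (Hd : forall k, Rabs (dsol a h e k) <= h * eps * W a 0 k).
  { induction k; simpl. rewrite Rabs_R0; lra.
    eapply Rle_trans. apply Rabs_triang. rewrite !Rabs_mult.
    rewrite (Rabs_right h) by lra.
    assert (Rabs (a k) * Rabs (dsol a h e k) <= Rabs (a k) * (h * eps * W a 0 k))
      by (apply Rmult_le_compat_l; auto; apply Rabs_pos).
    specialize (Hek k). nra. }
  intros k. eapply Rle_trans. apply Hd.
  rewrite (Rabs_right (1 - _)) by lra.
  assert (W a 0 k <= Rabs (Pr a 0 n) / (1 - Rabs (Pr a 0 n)) * M) by (apply W_bound; auto).
  assert (0 <= h * eps) by nra.
  assert (h * eps * W a 0 k <= h * eps * (Rabs (Pr a 0 n) / (1 - Rabs (Pr a 0 n)) * M))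
    by (apply Rmult_le_compat_l; auto).
  unfold Rdiv in *. nra.
Qed.

Fixpoint Sm (c : nat -> R) (m : nat) : R :=
  match m with O => 0 | S m' => Sm c m' + c m' end.

Lemma Sm_abs_diff c p r : Rabs (Sm c (p + r) - Sm c p) <=
  Sm (fun j => Rabs (c j)) (p + r) - Sm (fun j => Rabs (c j)) p.
Proof.
  induction r. rewrite Nat.add_0_r. unfold Rminus; rewrite !Rplus_opp_r, Rabs_R0; lra.
  rewrite Nat.add_succ_r. simpl.
  replace (Sm c (p + r) + c (p + r)%nat - Sm c p) with ((Sm c (p + r) - Sm c p) + c (p + r)%nat) by ring.
  eapply Rle_trans. apply Rabs_triang. lra.
Qed.

Lemma Sm_cv c B : (forall m, Sm (fun j => Rabs (c j)) m <= B) -> {l | Un_cv (Sm c) l}.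
Proof.
  intros HB. apply R_complete.
  assert (Hg : Un_growing (Sm (fun j => Rabs (c j)))).
  { intros m. simpl. assert (0 <= Rabs (c m)) by apply Rabs_pos. lra. }
  assert (Hu : has_ub (Sm (fun j => Rabs (c j)))).
  { exists B. intros x [i ->]. apply HB. }
  destruct (growing_cv _ Hg Hu) as [l' Hl'].
  assert (HC := CV_Cauchy _ (exist _ l' Hl')).
  intros eps Heps. destruct (HC eps Heps) as [N HN]. exists N.
  intros p q Hp Hq. unfold R_dist in *.
  destruct (Nat.le_ge_cases p q) as [Hpq|Hpq].
  - destruct (Nat.le_exists_sub p q Hpq) as [r [-> _]].
    rewrite Rabs_minus_sym. rewrite (Nat.add_comm r p).
    eapply Rle_lt_trans. apply Sm_abs_diff.
    specialize (HN (p + r)%nat p ltac:(lia) ltac:(lia)).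
    eapply Rle_lt_trans; [apply Rle_abs|exact HN].
  - destruct (Nat.le_exists_sub q p Hpq) as [r [-> _]].
    rewrite (Nat.add_comm r q).
    eapply Rle_lt_trans. apply Sm_abs_diff.
    specialize (HN (q + r)%nat q ltac:(lia) ltac:(lia)).
    eapply Rle_lt_trans; [apply Rle_abs|exact HN].
Qed.

Lemma lim_le u l k x B : Un_cv u l -> (forall m, Rabs (u (k + m)%nat - x) <= B) ->
  Rabs (l - x) <= B.
Proof.
  intros Hu HB. destruct (Rle_lt_dec (Rabs (l - x)) B) as [H|H]; auto. exfalso.
  destruct (Hu (Rabs (l - x) - B) ltac:(lra)) as [N HN].
  specialize (HN (k + N)%nat ltac:(lia)). specialize (HB N). unfold R_dist in HN.
  assert (Rabs (l - x) <= Rabs (l - u (k + N)%nat) + Rabs (u (k + N)%nat - x)).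
  { replace (l - x) with ((l - u (k + N)%nat) + (u (k + N)%nat - x)) by ring. apply Rabs_triang. }
  rewrite Rabs_minus_sym in HN. lra.
Qed.

Lemma Y_S a k m : Y a k (S m) = Y a k m + / Rabs (Pr a k (S m)).
Proof. reflexivity. Qed.
Lemma Sm_S c m : Sm c (S m) = Sm c m + c m.
Proof. reflexivity. Qed.

Lemma fwd_bound a (c : nat -> R) eps k m : (forall j, a j <> 0) ->
  (forall j, Rabs (c j) * Rabs (Pr a 0 (S j)) <= eps) ->
  Rabs (Pr a 0 k) * (Sm (fun j => Rabs (c j)) (k + m)
                    - Sm (fun j => Rabs (c j)) k) <= eps * Y a k m.
Proof.
  intros Hz He. induction m.
  - rewrite Nat.add_0_r. simpl. replace (Sm _ k - Sm _ k) with 0 by ring. lra.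
  - rewrite Nat.add_succ_r, Sm_S, Y_S.
    assert (E : Pr a 0 (S (k + m)) = Pr a 0 k * Pr a k (S m)).
    { rewrite <- Nat.add_succ_r, Pr_add. reflexivity. }
    specialize (He (k + m)%nat). rewrite E, Rabs_mult in He.
    assert (Pr a 0 k <> 0) by (apply Pr_nz; auto).
    assert (Pr a k (S m) <> 0) by (apply Pr_nz; auto).
    assert (0 < Rabs (Pr a 0 k)) by (apply Rabs_pos_lt; auto).
    assert (0 < Rabs (Pr a k (S m))) by (apply Rabs_pos_lt; auto).
    assert (Rabs (Pr a 0 k) * Rabs (c (k + m)%nat) <= eps * / Rabs (Pr a k (S m))).
    { apply (Rmult_le_reg_r (Rabs (Pr a k (S m)))); auto.
      rewrite (Rmult_assoc eps), Rinv_l by lra. nra. }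
    nra.
Qed.

Lemma core_gt a n M h eps e : (0 < n)%nat -> (forall j, a j <> 0) ->
  (forall k, a (k + n)%nat = a k) -> 1 < Rabs (Pr a 0 n) ->
  (forall k, Y a k n <= M) -> 0 < h -> 0 <= eps -> (forall k, Rabs (e k) <= eps) ->
  exists d, (forall k, d (S k) = a k * d k + h * e k) /\
    (forall k, Rabs (d k) <= h * Rabs (Pr a 0 n) / Rabs (1 - Rabs (Pr a 0 n)) * M * eps).
Proof.
  intros Hn Hz Hp Hr HM Hh He Hek.
  set (rho := Rabs (Pr a 0 n)) in *.
  set (B := rho / (rho - 1) * M).
  assert (HYB : forall m k, Y a k m <= B) by (intros; apply Y_bound; auto).
  set (c := fun j => e j / Pr a 0 (S j)).
  assert (Hc : forall j, Rabs (c j) * Rabs (Pr a 0 (S j)) <= eps).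
  { intros j. unfold c, Rdiv. rewrite Rabs_mult, Rabs_inv, Rmult_assoc, Rinv_l.
    rewrite Rmult_1_r; auto. apply Rabs_no_R0, Pr_nz; auto. }
  assert (HS : forall m, Sm (fun j => Rabs (c j)) m <= eps * B).
  { intros m. assert (H := fwd_bound a c eps 0 m Hz Hc). simpl in H.
    rewrite Rabs_R1 in H. assert (eps * Y a 0 m <= eps * B) by (apply Rmult_le_compat_l; auto).
    lra. }
  destruct (Sm_cv c (eps * B) HS) as [L HL].
  exists (fun k => Pr a 0 k * (- h * L + h * Sm c k)). split.
  - intros k. rewrite Sm_S. change (Pr a 0 (S k)) with (Pr a 0 k * a k).
    unfold c. change (Pr a 0 (S k)) with (Pr a 0 k * a k).
    assert (Pr a 0 k <> 0) by (apply Pr_nz; auto). specialize (Hz k). field; auto.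
  - intros k.
    assert (Hk0 : 0 < Rabs (Pr a 0 k)) by (apply Rabs_pos_lt, Pr_nz; auto).
    assert (H1 : forall m, Rabs (Sm c (k + m) - Sm c k) <= eps * B / Rabs (Pr a 0 k)).
    { intros m. apply (Rmult_le_reg_l (Rabs (Pr a 0 k))); auto.
      replace (Rabs (Pr a 0 k) * (eps * B / Rabs (Pr a 0 k))) with (eps * B) by (field; lra).
      eapply Rle_trans. apply Rmult_le_compat_l. lra. apply Sm_abs_diff.
      eapply Rle_trans. apply fwd_bound; auto.
      apply Rmult_le_compat_l; auto. }
    assert (H2 := lim_le _ _ k _ _ HL H1).
    replace (Pr a 0 k * (- h * L + h * Sm c k)) with (- (h * Pr a 0 k) * (L - Sm c k)) by ring.
    rewrite Rabs_mult, Rabs_Ropp, Rabs_mult, (Rabs_right h) by lra.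
    rewrite (Rabs_left1 (1 - rho)) by lra.
    replace (h * rho / - (1 - rho) * M * eps) with (h * Rabs (Pr a 0 k) * (eps * B / Rabs (Pr a 0 k)))
      by (unfold B; field; lra).
    apply Rmult_le_compat_l; auto. apply Rmult_le_pos; lra.
Qed.

Lemma FO h n mu rho M eps g x : 0 < h -> (0 < n)%nat -> (forall k, mu (k + n)%nat = mu k) ->
  (forall k, 1 + h * mu k <> 0) -> Rabs (Pr (fun k => 1 + h * mu k) 0 n) = rho -> rho <> 1 ->
  (forall k, Y (fun k => 1 + h * mu k) k n <= M) -> 0 <= eps ->
  (forall k, Rabs (Dh h x k - mu k * x k - g k) <= eps) ->
  exists z, (forall k, Dh h z k - mu k * z k = g k) /\
    (forall k, Rabs (x k - z k) <= h * rho / Rabs (1 - rho) * M * eps).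
Proof.
  intros Hh Hn Hp Hz Hr Hr1 HM He Hx.
  set (a := fun k => 1 + h * mu k) in *.
  assert (Hpa : forall k, a (k + n)%nat = a k) by (intros; unfold a; rewrite Hp; auto).
  set (e := fun k => Dh h x k - mu k * x k - g k).
  assert (Hd : exists d, (forall k, d (S k) = a k * d k + h * e k) /\
    (forall k, Rabs (d k) <= h * Rabs (Pr a 0 n) / Rabs (1 - Rabs (Pr a 0 n)) * M * eps)).
  { destruct (Rlt_or_le (Rabs (Pr a 0 n)) 1) as [H|H].
    - apply (core_lt a n M h eps e); auto.
    - apply (core_gt a n M h eps e); auto. lra. }
  rewrite Hr in Hd. destruct Hd as [d [Hd1 Hd2]].
  exists (fun k => x k - d k). split.
  - intros k. unfold Dh. rewrite Hd1. unfold a, e, Dh. field. lra.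
  - intros k. replace (x k - (x k - d k)) with (d k) by ring. auto.
Qed.

Lemma fold_plus_init l c : fold_right Rplus c l = fold_right Rplus 0 l + c.
Proof. induction l; simpl; lra. Qed.

Lemma fold_max l x : In x l -> x <= fold_right Rmax 0 l.
Proof.
  induction l; simpl; [tauto|]. intros [->|H]. apply Rmax_l.
  eapply Rle_trans. apply IHl; auto. apply Rmax_r.
Qed.

Lemma Y_Smax h n mu : (0 < n)%nat -> (forall k, mu (k + n)%nat = mu k) ->
  forall j, Y (fun k => 1 + h * mu k) j n <= Smax h n mu.
Proof.
  intros Hn Hp j. set (A := fun k => 1 + h * mu k).
  assert (HS : forall i, Sprod h n mu (j mod n) i = / Rabs (Pr A j i)).
  { induction i; simpl. rewrite Rabs_R1, Rinv_1; auto.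
    rewrite IHi, Rabs_mult, Rinv_mult. f_equal. f_equal. f_equal. unfold A. f_equal. f_equal.
    rewrite Nat.Div0.add_mod_idemp_l. apply per_mod; auto. }
  assert (HY : forall m, fold_right Rplus 0 (map (fun i => Sprod h n mu (j mod n) i) (seq 1 m)) = Y A j m).
  { induction m. reflexivity. rewrite seq_S, map_app, fold_right_app.
    rewrite fold_plus_init, IHm. cbn [map fold_right]. rewrite HS, Rplus_0_r. reflexivity. }
  rewrite <- HY. apply fold_max. apply in_map_iff. exists (j mod n). split. reflexivity.
  apply in_seq. split. lia. simpl. apply Nat.mod_upper_bound. lia.
Qed.

Lemma Pr_dexp h mu m : dexp h mu m = Pr (fun k => 1 + h * mu k) 0 m.
Proof. induction m; simpl; auto. rewrite IHm. reflexivity. Qed.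

Lemma ident h (lam y : nat -> R) k : h <> 0 ->
  let p := fun k => lam (k + 2)%nat in
  let q := fun k => Dh h lam (k + 1)%nat - lam (k + 1)%nat * lam (k + 2)%nat in
  let r := fun k => Dh h (Dh h lam) k - lam k * Dh h lam (k + 1)%nat
                    - lam k * lam (k + 1)%nat * lam (k + 2)%nat in
  let V := fun j => Dh h y j + lam j * y j in
  let Wx := fun j => Dh h V j - lam (j + 1)%nat * V j in
  Dh h (Dh h (Dh h y)) k + p k * Dh h (Dh h y) k + q k * Dh h y k + r k * y k
  = Dh h Wx k + lam (k + 2)%nat * Wx k.
Proof.
  intros Hh p q r V Wx. unfold p, q, r, Wx, V, Dh.
  replace (k + 2)%nat with (S (S k)) by lia.
  replace (k + 1)%nat with (S k) by lia.
  replace (S k + 1)%nat with (S (S k)) by lia.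
  field. auto.
Qed.

Lemma nz_lam h l : 0 < h -> l <> 1 / h /\ l <> - (1 / h) -> 1 + h * l <> 0 /\ 1 + h * - l <> 0.
Proof.
  intros Hh [H1 H2]. split; intros E.
  - apply H2. apply (Rmult_eq_reg_l h); [|lra]. field_simplify; lra.
  - apply H1. apply (Rmult_eq_reg_l h); [|lra]. field_simplify; lra.
Qed.

Lemma K0_pos h n mu : 0 < h -> (0 < n)%nat -> (forall k, mu (k + n)%nat = mu k) ->
  (forall k, 1 + h * mu k <> 0) -> 0 < Rabs (dexp h mu n) -> Rabs (dexp h mu n) <> 1 ->
  0 < K0 h n mu.
Proof.
  intros Hh Hn Hp Hz H1 H2. unfold K0.
  assert (HS : 0 < Smax h n mu).
  { eapply Rlt_le_trans; [|apply (Y_Smax h n mu Hn Hp 0)].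
    assert (HY := Y_mono (fun k => 1 + h * mu k) 0 1 (n - 1)).
    replace (1 + (n - 1))%nat with n in HY by lia.
    eapply Rlt_le_trans; [|apply HY].
    simpl. rewrite Rplus_0_l. apply Rinv_0_lt_compat, Rabs_pos_lt.
    rewrite Rmult_1_l. apply Hz. }
  assert (0 < Rabs (1 - Rabs (dexp h mu n))).
  { apply Rabs_pos_lt. lra. }
  apply Rmult_lt_0_compat; auto. unfold Rdiv. apply Rmult_lt_0_compat.
  apply Rmult_lt_0_compat; auto. apply Rinv_0_lt_compat; auto.
Qed.

Theorem theorem5p4 (h : R) (n : nat) (lam : nat -> R) :
  0 < h ->
  ncycle n lam ->
  (forall k, lam k <> 1 / h /\ lam k <> - (1 / h)) ->
  0 < Rabs (dexp h lam n) -> Rabs (dexp h lam n) <> 1 ->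
  0 < Rabs (dexp h (fun k => - lam k) n) ->
  Rabs (dexp h (fun k => - lam k) n) <> 1 ->
  let p := fun k => lam (k + 2)%nat in
  let q := fun k => Dh h lam (k + 1)%nat - lam (k + 1)%nat * lam (k + 2)%nat in
  let r := fun k => Dh h (Dh h lam) k - lam k * Dh h lam (k + 1)%nat
                    - lam k * lam (k + 1)%nat * lam (k + 2)%nat in
  HUS (fun y k => Dh h (Dh h (Dh h y)) k + p k * Dh h (Dh h y) k
                  + q k * Dh h y k + r k * y k)
      (fun _ => 0)
      (K0 h n lam * (K0 h n (fun k => - lam k)) ^ 2).
Proof.
  intros Hh Hc Hl HE1 HE1' HE2 HE2' p q r.
  destruct Hc as [Hn [Hp _]].
  assert (Hz1 : forall k, 1 + h * lam k <> 0) by (intros k; apply (nz_lam h (lam k) Hh (Hl k))).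
  assert (Hz2 : forall k, 1 + h * - lam k <> 0) by (intros k; apply (nz_lam h (lam k) Hh (Hl k))).
  assert (Hpm : forall k, (fun k => - lam k) (k + n)%nat = (fun k => - lam k) k)
    by (intros; simpl; rewrite Hp; auto).
  assert (Kl := K0_pos h n lam Hh Hn Hp Hz1 HE1 HE1').
  assert (Km := K0_pos h n (fun k => - lam k) Hh Hn Hpm Hz2 HE2 HE2').
  split. { apply Rmult_lt_0_compat; auto. apply pow_lt; auto. }
  intros eps Heps xi Hxi.
  set (V := fun j => Dh h xi j + lam j * xi j).
  set (Wx := fun j => Dh h V j - lam (j + 1)%nat * V j).
  set (A1 := fun k => 1 + h * lam k).
  set (A2 := fun k => 1 + h * - lam k).
  destruct (FO h n (fun k => - lam (k + 2)%nat) (Rabs (dexp h (fun k => - lam k) n))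
              (Smax h n (fun k => - lam k)) eps (fun _ => 0) Wx) as [w [Hw1 Hw2]]; auto.
  { intros k. replace (k + n + 2)%nat with (k + 2 + n)%nat by lia. rewrite Hp; auto. }
  { rewrite Pr_dexp. rewrite (Pr_shift (fun k => 1 + h * - lam k) 2 0 n). simpl.
    rewrite Pr_const; auto. intros k; simpl; rewrite Hp; auto. }
  { intros k. change (Y (fun j => A2 (j + 2)%nat) k n <= Smax h n (fun k => - lam k)).
    unfold A2. rewrite (Y_shift (fun k => 1 + h * - lam k) 2 k n). apply (Y_Smax h n (fun k => - lam k) Hn Hpm). }
  { lra. }
  { intros k. rewrite Rminus_0_r.
    replace (Dh h Wx k - - lam (k + 2)%nat * Wx k) with (Dh h Wx k + lam (k + 2)%nat * Wx k) by ring.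
    specialize (Hxi k). eapply Rle_trans; [|exact Hxi]. right. f_equal.
    rewrite Rminus_0_r. symmetry. unfold Wx, V, p, q, r. apply (ident h lam xi k ltac:(lra)). }
  destruct (FO h n (fun k => lam (k + 1)%nat) (Rabs (dexp h lam n))
              (Smax h n lam) (K0 h n (fun k => - lam k) * eps) w V) as [v [Hv1 Hv2]]; auto.
  { intros k. replace (k + n + 1)%nat with (k + 1 + n)%nat by lia. rewrite Hp; auto. }
  { rewrite Pr_dexp. rewrite (Pr_shift (fun k => 1 + h * lam k) 1 0 n). simpl.
    rewrite Pr_const; auto. intros k; simpl; rewrite Hp; auto. }
  { intros k. change (Y (fun j => A1 (j + 1)%nat) k n <= Smax h n lam).
    unfold A1. rewrite (Y_shift (fun k => 1 + h * lam k) 1 k n). apply (Y_Smax h n lam Hn Hp). }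
  { apply Rmult_le_pos; lra. }
  destruct (FO h n (fun k => - lam k) (Rabs (dexp h (fun k => - lam k) n))
              (Smax h n (fun k => - lam k)) (K0 h n lam * (K0 h n (fun k => - lam k) * eps)) v xi)
    as [y [Hy1 Hy2]]; auto.
  { rewrite Pr_dexp. reflexivity. }
  { intros k. apply (Y_Smax h n (fun k => - lam k) Hn Hpm). }
  { apply Rmult_le_pos; [lra|]. apply Rmult_le_pos; lra. }
  { intros k. replace (Dh h xi k - - lam k * xi k - v k) with (V k - v k) by (unfold V; ring).
    specialize (Hv2 k). unfold K0 at 1. exact Hv2. }
  exists y. split.
  - intros k.
    assert (EV : (fun j => Dh h y j + lam j * y j) = v).
    { apply functional_extensionality. intros j. rewrite <- Hy1. ring. }
    assert (EW : (fun j => Dh h v j - lam (j + 1)%nat * v j) = w).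
    { apply functional_extensionality. intros j. rewrite <- Hv1. ring. }
    specialize (Hw1 k). rewrite <- EW in Hw1. rewrite <- EV in Hw1.
    unfold p, q, r. rewrite (ident h lam y k ltac:(lra)). cbv zeta. cbv beta in *. lra.
  - intros k. eapply Rle_trans. apply Hy2. unfold K0. right. ring.
Qed.
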